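(* There is a left proper model structure on the category $s_{inj}\mathbf{Set}$ of semi-simplicial sets in which every morphism is a cofibration, a morphism $f:X\to Y$ is a weak equivalence if and only if $\dim X=\dim Y$, and the fibrations are the morphisms with the right lifting property against all weak equivalences.
   Context: $\Delta_{inj}$ is the category of nonempty finite totally ordered sets $[k]=\{0<\cdots<k\}$ and order-preserving injections; $s_{inj}\mathbf{Set}$ is the category of functors $\Delta_{inj}^{op}\to\mathbf{Set}$. For $X\in s_{inj}\mathbf{Set}$, $\dim X\in\{0,1,2,\dots\}\cup\{\infty\}$ is the smallest $n\ge 0$ such that $X([k])=\emptyset$ for all $k>n$, or $\infty$ if no such $n$ exists. A model structure is a triple (weak equivalences, cofibrations, fibrations) with (cof, fib $\cap$ we) and (cof $\cap$ we, fib) weak factorization systems and weak equivalences satisfying two-out-of-three; left proper means pushouts of weak equivalences along cofibrations are weak equivalences. *)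

(* Defs.v *)
From mathcomp Require Import all_boot.
Set Implicit Arguments. Unset Strict Implicit. Unset Printing Implicit Defensive.

(* The object [k] = {0 < ... < k} is represented by k : nat, with underlying set 'I_k.+1.
   A morphism [m] -> [n] is an order-preserving injection, i.e. a strictly increasing map. *)
Definition incr (m n : nat) (f : {ffun 'I_m.+1 -> 'I_n.+1}) : bool :=
  [forall i : 'I_m.+1, forall j : 'I_m.+1, (i < j) ==> (f i < f j)].

Definition Dinj (m n : nat) := {f : {ffun 'I_m.+1 -> 'I_n.+1} | incr f}.

Lemma incr_id n : incr ([ffun i => i] : {ffun 'I_n.+1 -> 'I_n.+1}).
Proof. by apply/forallP=> i; apply/forallP=> j; rewrite !ffunE; apply/implyP. Qed.

Definition Dinj_id (n : nat) : Dinj n n := exist _ [ffun i => i] (incr_id n).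

Lemma incr_comp m n p (g : Dinj n p) (f : Dinj m n) :
  incr ([ffun i => (val g) ((val f) i)] : {ffun 'I_m.+1 -> 'I_p.+1}).
Proof.
case: g => g /= Hg; case: f => f /= Hf.
apply/forallP=> i; apply/forallP=> j; rewrite !ffunE; apply/implyP=> Hij.
have := forallP (forallP Hf i) j; move/implyP/(_ Hij) => H1.
exact: (implyP (forallP (forallP Hg (f i)) (f j)) H1).
Qed.

Definition Dinj_comp m n p (g : Dinj n p) (f : Dinj m n) : Dinj m p :=
  exist _ [ffun i => (val g) ((val f) i)] (incr_comp g f).

Unset Implicit Arguments.
Record ssSet := SsSet {
  ss_obj :> nat -> Type;
  ss_act : forall m n, Dinj m n -> ss_obj n -> ss_obj m;
  ss_act_id : forall n (x : ss_obj n), ss_act n n (Dinj_id n) x = x;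
  ss_act_comp : forall m n p (g : Dinj n p) (f : Dinj m n) (x : ss_obj p),
      ss_act m p (Dinj_comp g f) x = ss_act m n f (ss_act n p g x)
}.

Record ssHom (X Y : ssSet) := SsHom {
  hom_fun :> forall n, X n -> Y n;
  hom_nat : forall m n (f : Dinj m n) (x : X n),
      hom_fun m (ss_act X m n f x) = ss_act Y m n f (hom_fun n x)
}.

Set Implicit Arguments.
Arguments ss_act s [m n] _ _.
Arguments hom_fun [X Y] s n _.
Arguments hom_nat [X Y] s [m n] f x.

Definition ssId (X : ssSet) : ssHom X X := @SsHom X X (fun n x => x) (fun m n f x => erefl).

Lemma ssComp_nat (X Y Z : ssSet) (g : ssHom Y Z) (f : ssHom X Y) m n (a : Dinj m n) (x : X n) :
  g m (f m (@ss_act X m n a x)) = @ss_act Z m n a (g n (f n x)).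
Proof. by rewrite hom_nat hom_nat. Qed.

Definition ssComp (X Y Z : ssSet) (g : ssHom Y Z) (f : ssHom X Y) : ssHom X Z :=
  @SsHom X Z (fun n x => g n (f n x)) (ssComp_nat g f).

Definition homEq (X Y : ssSet) (f g : ssHom X Y) : Prop := forall n (x : X n), f n x = g n x.

Definition MorClass := forall X Y : ssSet, ssHom X Y -> Prop.

Definition allMor : MorClass := fun _ _ _ => True.
Definition capMor (P Q : MorClass) : MorClass := fun X Y f => P X Y f /\ Q X Y f.

Definition Lifts (A B X Y : ssSet) (i : ssHom A B) (p : ssHom X Y) : Prop :=
  forall (u : ssHom A X) (v : ssHom B Y), homEq (ssComp p u) (ssComp v i) ->
    exists h : ssHom B X, homEq (ssComp h i) u /\ homEq (ssComp p h) v.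

Definition LLP (R : MorClass) : MorClass :=
  fun A B i => forall X Y (p : ssHom X Y), R X Y p -> Lifts i p.
Definition RLP (L : MorClass) : MorClass :=
  fun X Y p => forall A B (i : ssHom A B), L A B i -> Lifts i p.

Definition WFS (L R : MorClass) : Prop :=
  (forall X Y (f : ssHom X Y), exists (Z : ssSet) (l : ssHom X Z) (r : ssHom Z Y),
      L X Z l /\ R Z Y r /\ homEq (ssComp r l) f) /\
  (forall X Y (f : ssHom X Y), L X Y f <-> @LLP R X Y f) /\
  (forall X Y (f : ssHom X Y), R X Y f <-> @RLP L X Y f).

Definition TwoOutOfThree (W : MorClass) : Prop :=
  forall (X Y Z : ssSet) (f : ssHom X Y) (g : ssHom Y Z),
    (W X Y f -> W Y Z g -> W X Z (ssComp g f)) /\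
    (W X Y f -> W X Z (ssComp g f) -> W Y Z g) /\
    (W Y Z g -> W X Z (ssComp g f) -> W X Y f).

Definition ModelStructure (W C F : MorClass) : Prop :=
  WFS C (capMor F W) /\ WFS (capMor C W) F /\ TwoOutOfThree W.

Definition IsPushout (A B C D : ssSet) (i : ssHom A B) (w : ssHom A C)
    (j : ssHom C D) (k : ssHom B D) : Prop :=
  homEq (ssComp k i) (ssComp j w) /\
  forall (Z : ssSet) (b : ssHom B Z) (c : ssHom C Z),
    homEq (ssComp b i) (ssComp c w) ->
    exists u : ssHom D Z,
      homEq (ssComp u k) b /\ homEq (ssComp u j) c /\
      forall u' : ssHom D Z, homEq (ssComp u' k) b -> homEq (ssComp u' j) c -> homEq u u'.

Definition LeftProper (W C : MorClass) : Prop :=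
  forall (A B C' D : ssSet) (i : ssHom A B) (w : ssHom A C') (j : ssHom C' D) (k : ssHom B D),
    C A B i -> W A C' w -> IsPushout i w j k -> W B D k.

Definition dimBound (X : ssSet) (n : nat) : Prop := forall k, n < k -> X k -> False.

(* dim X = d, where None stands for infinity *)
Definition dim_is (X : ssSet) (d : option nat) : Prop :=
  match d with
  | Some n => dimBound X n /\ (forall m, dimBound X m -> n <= m)
  | None => forall n, ~ dimBound X n
  end.

Definition sameDim (X Y : ssSet) : Prop := exists d, dim_is X d /\ dim_is Y d.

Definition dimWE : MorClass := fun X Y _ => sameDim X Y.

(* Main.v *)
Require Import Defs.
From mathcomp Require Import all_boot.
From mathcomp Require Import zify.
From Stdlib Require Import Classical ProofIrrelevance Wf_nat.

Set Implicit Arguments. Unset Strict Implicit. Unset Printing Implicit Defensive.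

Definition eqB (X Y : ssSet) := forall n, dimBound X n <-> dimBound Y n.

Lemma bound_mono X n m : dimBound X n -> n <= m -> dimBound X m.
Proof. move=> H nm k mk; apply: H; exact: leq_ltn_trans nm mk. Qed.

Lemma dim_ex X : exists d, dim_is X d.
Proof.
case: (classic (exists n, dimBound X n)) => [Hex|Hn].
- have [n [[Hn Hmin] _]] := dec_inh_nat_subset_has_unique_least_element
     (dimBound X) (fun n => classic _) Hex.
  exists (Some n); split => // m Hm; apply/leP; exact: Hmin.
- exists None => n Hb; apply: Hn; by exists n.
Qed.

Lemma dim_is_eqB X Y d : eqB X Y -> dim_is X d -> dim_is Y d.
Proof.
move=> E; case: d => [n|] /=.
- move=> [H1 H2]; split; first by apply/E.
  move=> m Hm; apply: H2; exact/E.
- move=> H n Hn; apply: (H n); exact/E.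
Qed.

Lemma sameDimP X Y : sameDim X Y <-> eqB X Y.
Proof.
split.
- move=> [[n|] [HX HY]] k /=.
  + case: HX => HX1 HX2; case: HY => HY1 HY2; split => Hk.
    * apply: bound_mono HY1 _; exact: HX2.
    * apply: bound_mono HX1 _; exact: HY2.
  + split => Hk; [exfalso; exact: (HX k Hk) | exfalso; exact: (HY k Hk)].
- move=> E; have [d Hd] := dim_ex X; exists d; split => //; exact: dim_is_eqB Hd.
Qed.

Lemma hom_bound X Y (f : ssHom X Y) n : dimBound Y n -> dimBound X n.
Proof. move=> H k nk x; exact: (H k nk (f k x)). Qed.

Lemma maps_eqB X Y (f : ssHom X Y) (g : ssHom Y X) : eqB X Y.
Proof. move=> n; split; [exact: (@hom_bound Y X g n) | exact: (@hom_bound X Y f n)]. Qed.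

Lemma Dinj0 m (a : Dinj m 0) : m = 0.
Proof.
case: a => f Hf; case: m f Hf => // m f Hf.
have H := implyP (forallP (forallP Hf ord0) ord_max) (ltn0Sn m).
have := ltn_ord (f ord_max); lia.
Qed.

Lemma incr_widen k j (H : k.+1 <= j.+1) :
  incr ([ffun i => widen_ord H i] : {ffun 'I_k.+1 -> 'I_j.+1}).
Proof. by apply/forallP=> i; apply/forallP=> l; rewrite !ffunE; apply/implyP. Qed.

Lemma inh_down (X : ssSet) k j : k <= j -> X j -> inhabited (X k).
Proof.
move=> kj x; have H : k.+1 <= j.+1 by rewrite ltnS.
exact: (inhabits (ss_act X (exist (fun f => incr f) _ (@incr_widen k j H) : Dinj k j) x)).
Qed.

Definition PX (X : ssSet) k := k = 0 \/ inhabited (X k).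

Lemma PX_down X m n (a : Dinj m n) : PX X n -> PX X m.
Proof.
case=> [n0|[x]]; [left; subst n; exact: Dinj0 a | right; exact: (inhabits (ss_act X a x))].
Qed.

Lemma sig_eq (A : Type) (P : Prop) (x y : A) (p q : P) :
  x = y -> exist (fun _ => P) x p = exist (fun _ => P) y q.
Proof. move=> ->; f_equal; apply: proof_irrelevance. Qed.

Definition SubObj (Y : ssSet) (P : nat -> Prop)
  (HP : forall m n, Dinj m n -> P n -> P m) : ssSet.
refine (@SsSet (fun k => {y : Y k | P k})
  (fun m n a z => exist _ (ss_act Y a (proj1_sig z)) (HP m n a (proj2_sig z))) _ _).
- move=> n [y q] /=; apply: sig_eq; exact: ss_act_id.
- move=> m n p g f [y q] /=; apply: sig_eq; exact: ss_act_comp.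
Defined.

Definition subIncl Y P HP : ssHom (@SubObj Y P HP) Y :=
  @SsHom (@SubObj Y P HP) Y (fun n z => proj1_sig z) (fun m n f x => erefl).

Definition factL X Y (f : ssHom X Y) : ssHom X (@SubObj Y (PX X) (@PX_down X)).
refine (@SsHom X (@SubObj Y (PX X) (@PX_down X)) (fun n x => exist (fun _ => PX X n) (f n x) (or_intror (inhabits x))) _).
move=> m n a x /=; apply: sig_eq; exact: hom_nat.
Defined.

Lemma factZ X Y (f : ssHom X Y) : eqB X (@SubObj Y (PX X) (@PX_down X)).
Proof.
move=> n; split; last exact (@hom_bound X _ (factL f) n).
move=> H k nk z; case: (proj2_sig z) => [k0|[x]]; first lia.
exact: H k nk x.
Qed.

Lemma PX_of (A X A' : ssSet) (g : forall k, A k -> PX X k) (E : eqB A A') k :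
  A' k -> PX X k.
Proof.
case: k => [|k] a; first by left.
right; apply: NNPP => nX.
apply: ((E k).1 _ k.+1 (ltnSn k) a) => j kj b.
case: (g j b) => [j0|[x]]; first lia.
apply: nX; exact: inh_down kj x.
Qed.

Lemma fib_sub X Y : RLP dimWE (@subIncl Y (PX X) (@PX_down X)).
Proof.
move=> A B i /sameDimP E u v Hsq.
have PB : forall k, B k -> PX X k.
  exact: (@PX_of A X B (fun j a => proj2_sig (u j a)) E).
pose h := @SsHom B (@SubObj Y (PX X) (@PX_down X)) (fun n b => exist _ (v n b) (PB n b))
   (fun m n a b => sig_eq _ _ (hom_nat v a b)).
exists h; split => n x //=.
move: (Hsq n x) => /=; case: (u n x) => y q /= ->; exact: sig_eq.
Qed.

Lemma id_lifts A B Y (i : ssHom A B) : Lifts i (ssId Y).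
Proof. move=> u v Hsq; exists v; split => n x //=; exact: (esym (Hsq n x)). Qed.

Lemma iso_lifts A B X Y (i : ssHom A B) (p : ssHom X Y) (h : ssHom Y X) :
  homEq (ssComp h p) (ssId X) -> homEq (ssComp p h) (ssId Y) -> Lifts i p.
Proof.
move=> H1 H2 u v Hsq; exists (ssComp h v); split => n x /=.
- have := Hsq n x => /= <-; exact: H1.
- exact: H2.
Qed.

Lemma wfs1 : WFS allMor (capMor (RLP dimWE) dimWE).
Proof.
split; [|split].
- move=> X Y f; exists Y, f, (ssId Y); split => //; split => //.
  split; first by move=> A B i _; exact: id_lifts.
  by apply/sameDimP.
- move=> X Y f; split => // _ X' Y' p [Hp Hw].
  have [h [H1 H2]] := Hp X' Y' p Hw (ssId X') (ssId Y') (fun n x => erefl).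
  exact: iso_lifts H1 H2.
- move=> X Y f; split.
  + move=> [Hp Hw] A B i _.
    have [h [H1 H2]] := Hp X Y f Hw (ssId X) (ssId Y) (fun n x => erefl).
    exact: iso_lifts H1 H2.
  + move=> Hf.
    have [h [H1 H2]] := Hf X Y f I (ssId X) (ssId Y) (fun n x => erefl).
    split; first by move=> A B i _; exact: Hf.
    apply/sameDimP; exact: maps_eqB f h.
Qed.

Lemma wfs2 : WFS (capMor allMor dimWE) (RLP dimWE).
Proof.
split; [|split].
- move=> X Y f; exists (@SubObj Y (PX X) (@PX_down X)), (factL f), (@subIncl Y (PX X) (@PX_down X)).
  split; first by split => //; apply/sameDimP; exact: factZ.
  split => //; exact: fib_sub.
- move=> X Y f; split.
  + move=> [_ Hw] X' Y' p Hp; exact: Hp _ _ f Hw.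
  + move=> Hl; split => //.
    have [h [H1 H2]] := Hl _ _ _ (@fib_sub X Y) (factL f) (ssId Y) (fun n x => erefl).
    apply/sameDimP => n; split.
    * move=> Hx; exact: hom_bound h n ((factZ f n).1 Hx).
    * exact: hom_bound f n.
- move=> X Y f; split.
  + move=> Hf A B i [_ Hw]; exact: Hf.
  + move=> Hf A B i Hw; exact: Hf.
Qed.

Lemma two3 : TwoOutOfThree dimWE.
Proof.
move=> X Y Z f g; split; [|split] => /sameDimP H1 /sameDimP H2;
  apply/sameDimP => n; move: (H1 n) (H2 n); tauto.
Qed.

Lemma lproper : LeftProper dimWE allMor.
Proof.
move=> A B C D i w j k _ /sameDimP Hw [Hc Hpo].
apply/sameDimP => n; split; last exact: hom_bound k n.
move=> HB.
have PC : forall m, C m -> PX B m.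
  exact: (@PX_of A B C (fun m a => or_intror (inhabits (i m a))) Hw).
pose Z := @SubObj D (PX B) (@PX_down B).
pose c := @SsHom C Z (fun n y => exist _ (j n y) (PC n y))
   (fun m n a b => sig_eq _ _ (hom_nat j a b)).
have [u [Hu1 [Hu2 _]]] := Hpo Z (factL k) c (fun n x => sig_eq _ _ (Hc n x)).
move=> m nm d; case: (proj2_sig (u m d)) => [m0|[x]]; first lia.
exact: HB m nm x.
Qed.

Theorem mainTheorem16 :
  ModelStructure dimWE allMor (RLP dimWE) /\ LeftProper dimWE allMor.
Proof.
split; last exact: lproper.
split; first exact: wfs1.
split; first exact: wfs2.
exact: two3.
Qed.
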